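(* Let $(X,\to,d_A)$ be a metric transition system over $A$ (of arbitrary branching type), and let $d\in\mathit{DPMet}(\mathcal P(X))$ be join-preserving in its first argument and satisfy $d(X_1,\emptyset)=1$ for every nonempty $X_1\subseteq X$. Then $\beta_T(d)(X_1,\emptyset)=1$ for $X_1\neq\emptyset$, and otherwise \[\beta_T(d)(X_1,X_2)=\bigvee_{(a,x')\in\delta[X_1]}\ \bigvee_{\Delta\subseteq\delta[X_2]}\Big(\bigwedge_{b\in\mathrm{lab}(\Delta)}d_A(a,b)\ \land\ d(\{x'\},\mathrm{ter}(\delta[X_2]\setminus\Delta))\Big).\] Moreover $\beta_T$ is continuous, independent of the branching type of the transition system.
   Context: A metric transition system over $A$ is $(X,\to,d_A)$ with $\to\subseteq X\times A\times X$ and a metric $d_A\colon A\times A\to[0,1]$. $\delta(x)=\{(a,x')\mid x\xrightarrow{a}x'\}$, $\delta[Y]=\bigcup_{y\in Y}\delta(y)$; for $\Delta\subseteq A\times X$, $\mathrm{lab}(\Delta)$ and $\mathrm{ter}(\Delta)$ are the projections to the first and second components. On $[0,1]$: $r\oplus s=\min\{r+s,1\}$, $r\ominus s=\max\{0,r-s\}$; $\bigvee\emptyset=0$, $\bigwedge\emptyset=1$. A directed pseudo-metric on $Y$ is $d\colon Y\times Y\to[0,1]$ with $d(y,y)=0$ and $d(x,z)\le d(x,y)\oplus d(y,z)$; $\mathit{DPMet}(Y)$ is the set of these, ordered pointwise by $\le$. $d$ on $\mathcal P(X)$ is join-preserving in its first argument if $d(\bigcup_iX_i,Y)=\bigvee_id(X_i,Y)$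 for all families. For $f\colon X\to[0,1]$, $\tilde f(Y)=\bigvee_{x\in Y}f(x)$. Modality: $\bigcirc_a f(x)=\bigvee\{(1-d_A(b,a))\land f(x')\mid x\xrightarrow{b}x'\}$. $\alpha_T(\mathcal F)(X_1,X_2)=\bigvee_{f\in\mathcal F}(\tilde f(X_1)\ominus\tilde f(X_2))$; $\gamma_T(d)=\{f\in[0,1]^X\mid\forall X_1,X_2\colon\tilde f(X_1)\ominus\tilde f(X_2)\le d(X_1,X_2)\}$; $\mathit{lo}_T(\mathcal F)=\bigcup_{a\in A}\{\bigcirc_af\mid f\in\mathrm{cl}^{\mathrm{sh}}(\mathcal F)\}\cup\{1\}$, where $\mathrm{cl}^{\mathrm{sh}}(\mathcal F)$ is the closure of $\mathcal F$ under the constant shifts $f\mapsto f\ominus c$, $f\mapsto f\oplus c$ ($c\in[0,1]$) and $1$ is the constant function; $\beta_T=\alpha_T\circ\mathit{lo}_T\circ\gamma_T\colon\mathit{DPMet}(\mathcal P(X))\to\mathit{DPMet}(\mathcal P(X))$. Continuous means preserving suprema of well-ordered chains. *)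

(* Defs.v *)
From HB Require Import structures.
From mathcomp Require Import all_boot all_order all_algebra.
From mathcomp Require Import classical_sets boolp reals.
Set Implicit Arguments. Unset Strict Implicit. Unset Printing Implicit Defensive.
Import Order.TTheory GRing.Theory Num.Theory.
Local Open Scope classical_set_scope.
Local Open Scope ring_scope.

Section Defs.
Variable R : realType.

(* \bigvee : sup of a set of reals; sup set0 = 0 in MathComp-Analysis (lemma sup0) *)
Definition vsup (S : set R) : R := sup S.
Definition vinf (S : set R) : R := if pselect (S = set0) then 1 else inf S.
Definition oplus (r s : R) : R := Num.min (r + s) 1.
Definition ominus (r s : R) : R := Num.max 0 (r - s).

Variables (X A : Type).

Definition is_metric01 (dA : A -> A -> R) : Prop :=
  (forall a b, 0 <= dA a b <= 1) /\
  (forall a b, dA a b = 0 <-> a = b) /\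
  (forall a b, dA a b = dA b a) /\
  (forall a b c, dA a c <= dA a b + dA b c).

Definition is_dpmet (Y : Type) (d : Y -> Y -> R) : Prop :=
  (forall x y, 0 <= d x y <= 1) /\
  (forall y, d y y = 0) /\
  (forall x y z, d x z <= oplus (d x y) (d y z)).

Definition join_pres1 (d : set X -> set X -> R) : Prop :=
  forall (I : Type) (Xs : I -> set X) (Y : set X),
    d (\bigcup_(i in setT) Xs i) Y = vsup [set d (Xs i) Y | i in setT].

Variable trans : X -> A -> X -> Prop.  (* x --a--> x' *)
Variable dA : A -> A -> R.

Definition delta (x : X) : set (A * X) := [set p | trans x p.1 p.2].
Definition deltaS (Y : set X) : set (A * X) := [set p | exists2 y, Y y & trans y p.1 p.2].
Definition lab (D : set (A * X)) : set A := [set p.1 | p in D].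
Definition ter (D : set (A * X)) : set X := [set p.2 | p in D].

Definition tilde (f : X -> R) (Y : set X) : R := vsup [set f x | x in Y].

Definition modality (a : A) (f : X -> R) (x : X) : R :=
  vsup [set Num.min (1 - dA p.1 a) (f p.2) | p in delta x].

Definition alphaT (F : set (X -> R)) (X1 X2 : set X) : R :=
  vsup [set ominus (tilde f X1) (tilde f X2) | f in F].

Definition gammaT (d : set X -> set X -> R) : set (X -> R) :=
  [set f | (forall x, 0 <= f x <= 1) /\
           forall X1 X2, ominus (tilde f X1) (tilde f X2) <= d X1 X2].

Inductive clsh (F : set (X -> R)) : (X -> R) -> Prop :=
| clsh_base f : F f -> clsh F f
| clsh_sub f c : clsh F f -> 0 <= c <= 1 -> clsh F (fun x => ominus (f x) c)
| clsh_add f c : clsh F f -> 0 <= c <= 1 -> clsh F (fun x => oplus (f x) c).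

Definition loT (F : set (X -> R)) : set (X -> R) :=
  [set g | exists a f, clsh F f /\ g = modality a f] `|` [set (fun _ => 1)].

Definition betaT (d : set X -> set X -> R) : set X -> set X -> R :=
  alphaT (loT (gammaT d)).

Definition dle (d1 d2 : set X -> set X -> R) : Prop := forall X1 X2, d1 X1 X2 <= d2 X1 X2.

Definition well_ordered_chain (D : set (set X -> set X -> R)) : Prop :=
  (forall d1 d2, D d1 -> D d2 -> dle d1 d2 \/ dle d2 d1) /\
  (forall S, S `<=` D -> S !=set0 -> exists2 m, S m & forall s, S s -> dle m s).

Definition dsup (D : set (set X -> set X -> R)) : set X -> set X -> R :=
  fun X1 X2 => vsup [set d X1 X2 | d in D].

End Defs.

(* Main.v *)
Require Import Defs.
From HB Require Import structures.
From mathcomp Require Import all_boot all_order all_algebra.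
From mathcomp Require Import classical_sets boolp reals.
From mathcomp Require Import lra.
Import Order.TTheory GRing.Theory Num.Theory.
Local Open Scope classical_set_scope.
Local Open Scope ring_scope.
Set Implicit Arguments. Unset Strict Implicit. Unset Printing Implicit Defensive.

Section Helpers.
Variable R : realType.

Lemma minL (x y : R) : Num.min x y <= x. Proof. by rewrite ge_min lexx. Qed.
Lemma minR (x y : R) : Num.min x y <= y. Proof. by rewrite ge_min lexx orbT. Qed.

Lemma set0_or (T : Type) (S : set T) : S = set0 \/ exists x, S x.
Proof.
have [h|h] := pselect (exists x, S x); [by right|left].
apply/seteqP; split => x Sx //; exfalso; apply: h; by exists x.
Qed.

Lemma vsup_ub (S : set R) x c : (forall y, S y -> y <= c) -> S x -> x <= vsup S.
Proof.
move=> Hc Sx; have hub : has_ubound S by exists c.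
exact: (ub_le_sup hub).
Qed.

Lemma vsup_ge (S : set R) x c y : (forall y, S y -> y <= c) -> S x -> y <= x -> y <= vsup S.
Proof. move=> Hc Sx yx; apply: (le_trans yx); exact: (vsup_ub Hc Sx). Qed.

Lemma vsup_le (S : set R) c : (forall y, S y -> y <= c) -> 0 <= c -> vsup S <= c.
Proof.
move=> Hc c0; case: (set0_or S) => [->|ne]; first by rewrite /vsup sup0.
by apply: ge_sup.
Qed.

Lemma vsup_ge0 (S : set R) c : (forall y, S y -> 0 <= y <= c) -> 0 <= vsup S.
Proof.
move=> Hc; case: (set0_or S) => [->|[x Sx]]; first by rewrite /vsup sup0.
apply: (vsup_ge (c:=c) _ Sx); first by move=> y /Hc /andP[].
by case/andP: (Hc x Sx).
Qed.

Lemma vinf_lb (S : set R) x : (forall y, S y -> 0 <= y) -> S x -> vinf S <= x.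
Proof.
move=> H0 Sx; rewrite /vinf; destruct (pselect (S = set0)) as [e|ne].
  by exfalso; move: Sx; rewrite e.
have hlb : has_lbound S.
  exists 0; rewrite /lbound /=; exact: H0.
exact: (ge_inf hlb).
Qed.

Lemma vinf_ge (S : set R) c : (forall y, S y -> c <= y) -> c <= 1 -> c <= vinf S.
Proof.
move=> H c1; rewrite /vinf; destruct (pselect (S = set0)) as [e|e]; first by [].
case: (set0_or S) => [//|ne].
by apply: lb_le_inf.
Qed.

Lemma vinf_bnd (S : set R) : (forall y, S y -> 0 <= y <= 1) -> 0 <= vinf S <= 1.
Proof.
move=> H; apply/andP; split.
  by apply: vinf_ge => // y /H /andP[].
case: (set0_or S) => [->|[x Sx]].
  by rewrite /vinf; destruct (pselect (@set0 R = set0)).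
apply: le_trans (vinf_lb _ Sx) _; first by move=> y /H /andP[].
by case/andP: (H x Sx).
Qed.

Lemma minbnd (u v : R) : 0 <= u <= 1 -> 0 <= v <= 1 -> 0 <= Num.min u v <= 1.
Proof.
move=> /andP[h1 h2] /andP[h3 h4]; apply/andP; split.
  by rewrite le_min h1 h3.
by rewrite ge_min h2.
Qed.

End Helpers.

Section Main.
Variables (R : realType) (X A : Type) (trans : X -> A -> X -> Prop) (dA : A -> A -> R).
Hypothesis HdA : is_metric01 dA.

Definition in01 (f : X -> R) := forall x, 0 <= f x <= 1.
Definition in01d (e : set X -> set X -> R) := forall U V, 0 <= e U V <= 1.

Lemma tilde_ub (f : X -> R) (Y : set X) x : in01 f -> Y x -> f x <= tilde f Y.
Proof.
move=> Hf Yx; apply: (vsup_ub (c:=1)); last by exists x.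
by move=> _ [y _ <-]; case/andP: (Hf y).
Qed.

Lemma tilde_le (f : X -> R) (Y : set X) c : (forall y, Y y -> f y <= c) -> 0 <= c -> tilde f Y <= c.
Proof. move=> H c0; apply: vsup_le => // _ [y Yy <-]; exact: H. Qed.

Lemma tilde_bnd (f : X -> R) (Y : set X) : in01 f -> 0 <= tilde f Y <= 1.
Proof.
move=> Hf; apply/andP; split; last by apply: tilde_le => // y _; case/andP: (Hf y).
apply: (vsup_ge0 (c:=1)) => _ [y _ <-]; exact: Hf.
Qed.

Lemma tilde0 (f : X -> R) : tilde f set0 = 0.
Proof. by rewrite /tilde image_set0 /vsup sup0. Qed.

Lemma tilde1 (f : X -> R) x : tilde f [set x] = f x.
Proof. by rewrite /tilde image_set1 /vsup sup1. Qed.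

Lemma dA_bnd a b : 0 <= dA a b <= 1.
Proof. by case: HdA => H _; exact: H. Qed.

Lemma mod_bnd a (f : X -> R) : in01 f -> in01 (modality trans dA a f).
Proof.
move=> Hf x; apply/andP; split.
  apply: (vsup_ge0 (c:=1)) => _ [p _ <-]; apply: minbnd => //.
  by have := dA_bnd p.1 a; move=> /andP[? ?]; apply/andP; split; lra.
apply: vsup_le => // _ [p _ <-]; rewrite ge_min; case/andP: (Hf p.2) => _ ->.
by rewrite orbT.
Qed.

Lemma mod_elem a (f : X -> R) x q : in01 f -> delta trans x q ->
  Num.min (1 - dA q.1 a) (f q.2) <= modality trans dA a f x.
Proof.
move=> Hf Hq; apply: (vsup_ub (c:=1)); last by exists q.
move=> _ [p _ <-]; rewrite ge_min; case/andP: (Hf p.2) => _ ->.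
by rewrite orbT.
Qed.

Lemma clsh_in01 (F : set (X -> R)) f : (forall g, F g -> in01 g) -> clsh F f -> in01 f.
Proof.
move=> HF; elim => {f}.
- by move=> f /HF.
- move=> f c _ Hf /andP[c0 c1] x; rewrite /ominus le_max ge_max lexx /=.
  by case/andP: (Hf x) => ? ?; apply/andP; split => //; lra.
- move=> f c _ Hf /andP[c0 c1] x; rewrite /oplus le_min ge_min lexx orbT andbT.
  by case/andP: (Hf x) => ? ?; lra.
Qed.

Lemma gamma_in01 (d : set X -> set X -> R) f : gammaT d f -> in01 f.
Proof. by case. Qed.

Lemma loT_in01 (d : set X -> set X -> R) g : loT trans dA (gammaT d) g -> in01 g.
Proof.
case=> [[a [f [Hf ->]]]|->].
  by apply: mod_bnd; apply: clsh_in01 Hf; exact: gamma_in01.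
by move=> x; rewrite lexx ler01.
Qed.

Lemma loT_elem01 (d : set X -> set X -> R) g (Y1 Y2 : set X) : loT trans dA (gammaT d) g ->
  0 <= ominus (tilde g Y1) (tilde g Y2) <= 1.
Proof.
move=> /loT_in01 Hg.
have := tilde_bnd Y1 Hg; have := tilde_bnd Y2 Hg => /andP[? ?] /andP[? ?].
rewrite /ominus le_max ge_max lexx /=; apply/andP; split => //; lra.
Qed.

Lemma beta_bnd (d : set X -> set X -> R) (Y1 Y2 : set X) : 0 <= betaT trans dA d Y1 Y2 <= 1.
Proof.
apply/andP; split.
  apply: (vsup_ge0 (c:=1)) => _ [g Hg <-]; exact: (loT_elem01 Y1 Y2 Hg).
by apply: vsup_le => // _ [g Hg <-]; case/andP: (loT_elem01 Y1 Y2 Hg).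
Qed.

Definition Qf (d : set X -> set X -> R) (f : X -> R) :=
  in01 f /\ forall x Y t, 0 <= t -> (forall y, Y y -> f y <= t) -> f x <= d [set x] Y + t.

Lemma clsh_Q (d : set X -> set X -> R) : is_dpmet d -> (forall X1 : set X, X1 !=set0 -> d X1 set0 = 1) ->
  forall f, clsh (gammaT d) f -> Qf d f.
Proof.
move=> [Hdb [Hd0 Hdt]] H1 f; elim => {f}.
- move=> f [Hf Hg]; split => // x Y t t0 Ht.
  have := Hg [set x] Y; rewrite tilde1 /ominus ge_max => /andP[_ h].
  have := tilde_le Ht t0; lra.
- move=> f c _ [Hf HQ] /andP[c0 c1]; split.
    move=> x; rewrite /ominus le_max ge_max lexx /=.
    by case/andP: (Hf x) => ? ?; apply/andP; split => //; lra.
  move=> x Y t t0 Ht.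
  have h : forall y, Y y -> f y <= t + c.
    by move=> y /Ht; rewrite /ominus ge_max => /andP[_]; lra.
  have := HQ x Y (t + c) ltac:(lra) h.
  have := Hdb [set x] Y => /andP[? ?].
  rewrite /ominus ge_max => ?; apply/andP; split; lra.
- move=> f c _ [Hf HQ] /andP[c0 c1]; split.
    move=> x; rewrite /oplus le_min ge_min lexx orbT andbT.
    by case/andP: (Hf x) => ? ?; lra.
  move=> x Y t t0 Ht.
  have := Hdb [set x] Y => /andP[dx0 _].
  case: (set0_or Y) => [eY|[y0 Yy0]].
    rewrite eY H1; last by exists x.
    by rewrite /oplus ge_min; apply/orP; right; lra.
  case: (lerP 1 t) => t1.
    by rewrite /oplus ge_min; apply/orP; right; lra.
  have h : forall y, Y y -> f y <= t - c.
    move=> y /Ht; rewrite /oplus ge_min => /orP[]; lra.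
  have := h y0 Yy0; have := Hf y0 => /andP[? ?] ?.
  have := HQ x Y (t - c) ltac:(lra) h.
  by rewrite /oplus ge_min => ?; apply/orP; left; lra.
Qed.

Definition PhiT (e : set X -> set X -> R) (X2 : set X) (p : A * X) (Del : set (A * X)) : R :=
  Num.min (vinf [set dA p.1 b | b in lab Del])
          (e [set p.2] (ter (deltaS trans X2 `\` Del))).
Definition PhiIn (e : set X -> set X -> R) (X2 : set X) (p : A * X) : R :=
  vsup [set PhiT e X2 p Del | Del in [set Del | Del `<=` deltaS trans X2]].
Definition Phi (e : set X -> set X -> R) (X1 X2 : set X) : R :=
  vsup [set PhiIn e X2 p | p in deltaS trans X1].

Lemma vinf_dA_bnd a (D : set (A * X)) : 0 <= vinf [set dA a b | b in lab D] <= 1.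
Proof. by apply: vinf_bnd => _ [b _ <-]; exact: dA_bnd. Qed.

Lemma PhiT_bnd e (X2 : set X) p Del : in01d e -> 0 <= PhiT e X2 p Del <= 1.
Proof. by move=> He; apply: minbnd; [exact: vinf_dA_bnd | exact: He]. Qed.

Lemma PhiIn_bnd e (X2 : set X) p : in01d e -> 0 <= PhiIn e X2 p <= 1.
Proof.
move=> He; apply/andP; split.
  by apply: (vsup_ge0 (c:=1)) => _ [Del _ <-]; exact: PhiT_bnd.
by apply: vsup_le => // _ [Del _ <-]; case/andP: (PhiT_bnd X2 p Del He).
Qed.

Lemma Phi_bnd e (X1 X2 : set X) : in01d e -> 0 <= Phi e X1 X2 <= 1.
Proof.
move=> He; apply/andP; split.
  by apply: (vsup_ge0 (c:=1)) => _ [p _ <-]; exact: PhiIn_bnd.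
by apply: vsup_le => // _ [p _ <-]; case/andP: (PhiIn_bnd X2 p He).
Qed.

Lemma Phi_ub e (X1 X2 : set X) p Del : in01d e -> deltaS trans X1 p -> Del `<=` deltaS trans X2 ->
  PhiT e X2 p Del <= Phi e X1 X2.
Proof.
move=> He Hp HD.
apply: (@le_trans _ _ (PhiIn e X2 p)).
  apply: (vsup_ub (c:=1)); last by exists Del.
  by move=> _ [D _ <-]; case/andP: (PhiT_bnd X2 p D He).
apply: (vsup_ub (c:=1)); last by exists p.
by move=> _ [q _ <-]; case/andP: (PhiIn_bnd X2 q He).
Qed.

Lemma Phi_le e (X1 X2 : set X) c :
  (forall p Del, deltaS trans X1 p -> Del `<=` deltaS trans X2 -> PhiT e X2 p Del <= c) ->
  0 <= c -> Phi e X1 X2 <= c.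
Proof.
move=> H c0; apply: vsup_le => // _ [p Hp <-].
apply: vsup_le => // _ [Del HD <-]; exact: H.
Qed.

Lemma join_tilde (d : set X -> set X -> R) : join_pres1 d -> forall Y Z, d Y Z = tilde (fun y => d [set y] Z) Y.
Proof.
move=> Hj Y Z.
have := Hj {y : X | Y y} (fun i => [set proj1_sig i]) Z.
have -> : \bigcup_(i in @setT {y : X | Y y}) [set proj1_sig i] = Y.
  apply/seteqP; split => [y [i _ ->]|y Yy]; first exact: (proj2_sig i).
  by exists (exist _ y Yy).
move=> ->; rewrite /tilde; congr vsup.
apply/seteqP; split => [_ [i _ <-]|_ [y Yy <-]].
  by exists (proj1_sig i) => //; exact: proj2_sig.
by exists (exist _ y Yy).
Qed.


Lemma const01 : in01 (fun _ : X => 1).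
Proof. by move=> x; rewrite lexx ler01. Qed.

Lemma upper (d : set X -> set X -> R) : is_dpmet d ->
  (forall X1 : set X, X1 !=set0 -> d X1 set0 = 1) ->
  forall X1 X2 : set X, (X1 = set0 \/ X2 !=set0) ->
  betaT trans dA d X1 X2 <= Phi d X1 X2.
Proof.
move=> Hd H1 X1 X2 hX.
have Hdb : in01d d by case: Hd.
have /andP[P0 P1] := Phi_bnd X1 X2 Hdb.
apply: vsup_le => // _ [g Hg <-].
case: Hg => [[a [f [Hf ->]]]|->]; last first.
  case: hX => [eX|[y Yy]].
    have -> : tilde (fun _ : X => (1 : R)) X1 = 0 by rewrite eX tilde0.
    rewrite /ominus ge_max P0 /=.
    by have := tilde_bnd X2 const01 => /andP[? ?]; lra.
  have h1 := tilde_ub const01 Yy.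
  have := tilde_bnd X1 const01 => /andP[? ?].
  by rewrite /ominus ge_max P0 /=; lra.
have [Hf01 HQ] := clsh_Q Hd H1 Hf.
have g01 := mod_bnd a Hf01.
have /andP[s0 s1] := tilde_bnd X2 g01.
suff : tilde (modality trans dA a f) X1 <= Phi d X1 X2 + tilde (modality trans dA a f) X2.
  by rewrite /ominus ge_max P0 /= => h; lra.
apply: tilde_le; last by lra.
move=> x X1x; apply: vsup_le; last by lra.
move=> _ [p Hp <-].
pose s := tilde (modality trans dA a f) X2.
pose Del := [set q | deltaS trans X2 q /\ 1 - dA q.1 a <= s].
have HD : Del `<=` deltaS trans X2 by move=> q [].
have hp1 : deltaS trans X1 p by exists x.
have hub := Phi_ub Hdb hp1 HD.
have hu1 : Num.min (1 - dA p.1 a) (f p.2) <= 1 - dA p.1 a := minL _ _.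
have hu2 : Num.min (1 - dA p.1 a) (f p.2) <= f p.2 := minR _ _.
have hu3 : Num.min (1 - dA p.1 a) (f p.2) <= 1.
  by case/andP: (Hf01 p.2) => _ h; apply: le_trans hu2 h.
have h1 : Num.min (1 - dA p.1 a) (f p.2) - s <= vinf [set dA p.1 b | b in lab Del].
  apply: vinf_ge; last by rewrite /s; lra.
  move=> _ [_ [q [Hq1 Hq2] <-] <-].
  case: HdA => _ [_ [Hsym Htri]].
  by have := Htri q.1 p.1 a; rewrite (Hsym q.1 p.1); lra.
have h2 : Num.min (1 - dA p.1 a) (f p.2) - s <= d [set p.2] (ter (deltaS trans X2 `\` Del)).
  have := HQ p.2 (ter (deltaS trans X2 `\` Del)) s s0.
  have hb : forall y, ter (deltaS trans X2 `\` Del) y -> f y <= s.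
    move=> _ [q [[y0 Xy0 Hq] nD] <-].
    have : Num.min (1 - dA q.1 a) (f q.2) <= s.
      apply: le_trans (mod_elem a Hf01 Hq) _.
      exact: (tilde_ub g01 Xy0).
    rewrite ge_min => /orP[h|//].
    by exfalso; apply: nD; split => //; exists y0.
  by move=> /(_ hb) h; lra.
have hm : Num.min (1 - dA p.1 a) (f p.2) - s <= PhiT d X2 p Del.
  by rewrite /PhiT le_min h1 h2.
rewrite -/s; lra.
Qed.

Lemma lower (d : set X -> set X -> R) : is_dpmet d -> join_pres1 d ->
  forall X1 X2 : set X, Phi d X1 X2 <= betaT trans dA d X1 X2.
Proof.
move=> Hd Hj X1 X2.
have Hdb : in01d d by case: Hd.
case: (Hd) => _ [Hd0 Htr].
have /andP[B0 _] := beta_bnd d X1 X2.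
apply: Phi_le => // p Del Hp HD.
case: Hp => x X1x Hx.
set T := ter (deltaS trans X2 `\` Del).
set r := PhiT d X2 p Del.
have /andP[r0 r1] : 0 <= r <= 1 by apply: PhiT_bnd.
pose f := fun y => d [set y] T.
have f01 : in01 f by move=> y; exact: Hdb.
have jt : forall Y, tilde f Y = d Y T by move=> Y; rewrite (join_tilde Hj Y T).
have fg : gammaT d f.
  split => // Y1 Y2; rewrite !jt.
  have := Htr Y1 Y2 T; have := Hdb Y1 Y2 => /andP[? ?].
  have := minL (d Y1 Y2 + d Y2 T) 1.
  rewrite /oplus /ominus ge_max => ? ?; apply/andP; split => //; lra.
have fT : forall y, T y -> f y = 0.
  move=> y Ty; apply/le_anti/andP; split; last by case/andP: (f01 y).
  by rewrite -(Hd0 T) -jt; exact: tilde_ub.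
pose h := fun y => oplus (f y) (1 - r).
have hcl : clsh (gammaT d) h.
  by apply: clsh_add; [exact: clsh_base | apply/andP; split; lra].
have h01 : in01 h := clsh_in01 (@gamma_in01 d) hcl.
pose g := modality trans dA p.1 h.
have gL : loT trans dA (gammaT d) g by left; exists p.1, h.
have g01 : in01 g := mod_bnd p.1 h01.
have hb : ominus (tilde g X1) (tilde g X2) <= betaT trans dA d X1 X2.
  apply: (vsup_ub (c:=1)); last by exists g.
  by move=> _ [g' Hg' <-]; case/andP: (loT_elem01 X1 X2 Hg').
have t1 : 1 <= tilde g X1.
  apply: le_trans (tilde_ub g01 X1x).
  apply: le_trans (mod_elem p.1 h01 Hx).
  have -> : dA p.1 p.1 = 0 by case: HdA => _ [Hz _]; apply/Hz.
  rewrite le_min subr0 lexx /= /h /oplus le_min lexx andbT.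
  have : r <= f p.2 := minR _ _.
  lra.
have t2 : tilde g X2 <= 1 - r.
  apply: tilde_le; last by lra.
  move=> y X2y; apply: vsup_le; last by lra.
  move=> _ [q Hq <-].
  have [Dq|nDq] := pselect (Del q).
    have : r <= dA p.1 q.1.
      apply: le_trans (minL _ _) _.
      apply: vinf_lb; first by move=> _ [b _ <-]; case/andP: (dA_bnd p.1 b).
      by exists q.1 => //; exists q.
    have -> : dA q.1 p.1 = dA p.1 q.1 by case: HdA => _ [_ [Hsym _]]; apply: Hsym.
    by move=> hr; apply: le_trans (minL _ _) _; lra.
  have Tq : T q.2 by exists q => //; split => //; exists y.
  apply: le_trans (minR _ _) _.
  by rewrite /h fT // /oplus add0r; exact: minL.
apply: le_trans hb.
by rewrite /ominus le_max; apply/orP; right; lra.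
Qed.

Lemma part1 (d : set X -> set X -> R) (X1 : set X) : X1 !=set0 -> betaT trans dA d X1 set0 = 1.
Proof.
move=> [x X1x]; apply/le_anti/andP; split.
  by apply: vsup_le => // _ [g Hg <-]; case/andP: (loT_elem01 X1 set0 Hg).
apply: (vsup_ge (c:=1) (x := ominus (tilde (fun _ => 1) X1) (tilde (fun _ => 1) set0))).
- by move=> _ [g Hg <-]; case/andP: (loT_elem01 X1 set0 Hg).
- by exists (fun _ => 1) => //; right.
- rewrite tilde0 /ominus le_max subr0; apply/orP; right.
  exact: (tilde_ub const01 X1x).
Qed.

Lemma formula (d : set X -> set X -> R) : is_dpmet d -> join_pres1 d ->
  (forall X1 : set X, X1 !=set0 -> d X1 set0 = 1) ->
  forall X1 X2 : set X, (X1 = set0 \/ X2 !=set0) ->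
  betaT trans dA d X1 X2 = Phi d X1 X2.
Proof.
move=> Hd Hj H1 X1 X2 hX; apply/le_anti/andP; split.
  exact: upper.
exact: lower.
Qed.

End Main.

Section Cont.
Variables (R : realType) (X A : Type) (trans : X -> A -> X -> Prop) (dA : A -> A -> R).
Hypothesis HdA : is_metric01 dA.

Definition Hyp1 (d : set X -> set X -> R) := forall X1 : set X, X1 !=set0 -> d X1 set0 = 1.

Lemma dsup_ub (D : set (set X -> set X -> R)) d U V :
  (forall d, D d -> in01d d) -> D d -> d U V <= dsup D U V.
Proof.
move=> HD Dd; apply: (vsup_ub (c:=1)); last by exists d.
by move=> _ [e De <-]; case/andP: (HD e De U V).
Qed.

Lemma dsup_bnd (D : set (set X -> set X -> R)) :
  (forall d, D d -> in01d d) -> in01d (dsup D).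
Proof.
move=> HD U V; apply/andP; split.
  by apply: (vsup_ge0 (c:=1)) => _ [e De <-]; exact: HD.
by apply: vsup_le => // _ [e De <-]; case/andP: (HD e De U V).
Qed.

Lemma dsup_dpmet (D : set (set X -> set X -> R)) :
  (forall d, D d -> is_dpmet d) -> is_dpmet (dsup D).
Proof.
move=> HD.
have H01 : forall d, D d -> in01d d by move=> d /HD [].
split; first exact: dsup_bnd.
split.
  move=> y; apply/le_anti/andP; split.
    by apply: vsup_le => // _ [e De <-]; case: (HD e De) => _ [-> _].
  by case/andP: (dsup_bnd H01 y y).
move=> x y z.
have /andP[a0 _] := dsup_bnd H01 x y.
have /andP[b0 _] := dsup_bnd H01 y z.
apply: vsup_le; last by rewrite /oplus le_min ler01 andbT; lra.
move=> _ [e De <-].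
have := dsup_ub x y H01 De; have := dsup_ub y z H01 De.
case: (HD e De) => He [_ Ht]; have := Ht x y z.
have := He x z => /andP[_ ?].
have := minL (e x y + e y z) 1.
rewrite /oplus => ? h3 ? ?; rewrite le_min; apply/andP; split => //; lra.
Qed.

Lemma dsup_join (D : set (set X -> set X -> R)) :
  (forall d, D d -> is_dpmet d /\ join_pres1 d) -> join_pres1 (dsup D).
Proof.
move=> HD.
have H01 : forall d, D d -> in01d d by move=> d /HD [[]].
move=> I Xs Y.
have bR : 0 <= vsup [set dsup D (Xs i) Y | i in setT].
  by apply: (vsup_ge0 (c:=1)) => _ [i _ <-]; exact: dsup_bnd.
have bL := dsup_bnd H01 (\bigcup_(i in setT) Xs i) Y.
case/andP: bL => bL _.
apply/le_anti/andP; split.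
  apply: vsup_le => // _ [e De <-].
  case: (HD e De) => _ Hj; rewrite Hj.
  apply: vsup_le => // _ [i _ <-].
  apply: (vsup_ge (c:=1) (x := dsup D (Xs i) Y)).
  - by move=> _ [j _ <-]; case/andP: (dsup_bnd H01 (Xs j) Y).
  - by exists i.
  - exact: dsup_ub.
apply: vsup_le => // _ [i _ <-].
apply: vsup_le => // _ [e De <-].
apply: (vsup_ge (c:=1) (x := e (\bigcup_(i in setT) Xs i) Y)).
- by move=> _ [e' De' <-]; case/andP: (H01 e' De' (\bigcup_(i in setT) Xs i) Y).
- by exists e.
- case: (HD e De) => _ Hj; rewrite Hj.
  apply: (vsup_ub (c:=1)); last by exists i.
  by move=> _ [j _ <-]; case/andP: (H01 e De (Xs j) Y).
Qed.

Lemma dsup_H1 (D : set (set X -> set X -> R)) : D !=set0 ->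
  (forall d, D d -> Hyp1 d) -> Hyp1 (dsup D).
Proof.
move=> [d0 D0] HD X1 ne; apply/le_anti/andP; split.
  by apply: vsup_le => // _ [e De <-]; rewrite HD.
apply: (vsup_ge (c:=1) (x := d0 X1 set0)).
- by move=> _ [e De <-]; rewrite HD.
- by exists d0.
- by rewrite HD.
Qed.

End Cont.

Theorem mainTheorem3 (R : realType) (X A : Type) (trans : X -> A -> X -> Prop)
  (dA : A -> A -> R) (HdA : is_metric01 dA) :
  (forall d : set X -> set X -> R,
     is_dpmet d -> join_pres1 d ->
     (forall X1 : set X, X1 !=set0 -> d X1 set0 = 1) ->
     (forall X1 : set X, X1 !=set0 -> betaT trans dA d X1 set0 = 1) /\
     (forall X1 X2 : set X, (X1 = set0 \/ X2 !=set0) ->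
        betaT trans dA d X1 X2 =
        vsup [set vsup [set Num.min (vinf [set dA p.1 b | b in lab Del])
                                    (d [set p.2] (ter (deltaS trans X2 `\` Del)))
                       | Del in [set Del | Del `<=` deltaS trans X2]]
             | p in deltaS trans X1])) /\
  (forall D : set (set X -> set X -> R),
     D !=set0 -> well_ordered_chain D ->
     (forall d, D d -> [/\ is_dpmet d, join_pres1 d &
                         forall X1 : set X, X1 !=set0 -> d X1 set0 = 1]) ->
     betaT trans dA (dsup D) = dsup [set betaT trans dA d | d in D]).
Proof.
split.
  move=> d Hd Hj H1; split; first by move=> X1; exact: part1.
  move=> X1 X2 hX; exact: (formula trans HdA Hd Hj H1 hX).
move=> D neD _ HD.
have H01 : forall d, D d -> in01d d by move=> d /HD [[]].
have Hs1 : is_dpmet (dsup D) by apply: dsup_dpmet => d /HD [].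
have Hs2 : join_pres1 (dsup D) by apply: dsup_join => d /HD [].
have Hs3 : Hyp1 (dsup D) by apply: dsup_H1 => // d /HD [].
apply/funext => X1; apply/funext => X2.
have -> : dsup [set betaT trans dA d | d in D] X1 X2 =
          vsup [set betaT trans dA d X1 X2 | d in D].
  rewrite /dsup; congr vsup; apply/seteqP; split.
    by move=> _ [_ [e De <-] <-]; exists e.
  by move=> _ [e De <-]; exists (betaT trans dA e) => //; exists e.
have bM : forall e, D e -> betaT trans dA e X1 X2 <= vsup [set betaT trans dA d X1 X2 | d in D].
  move=> e De; apply: (vsup_ub (c:=1)); last by exists e.
  by move=> _ [e' _ <-]; case/andP: (beta_bnd trans HdA e' X1 X2).
have M0 : 0 <= vsup [set betaT trans dA d X1 X2 | d in D].
  by apply: (vsup_ge0 (c:=1)) => _ [e _ <-]; exact: beta_bnd.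
have [hX|hX] := pselect (X1 = set0 \/ X2 !=set0).
  rewrite (formula trans HdA Hs1 Hs2 Hs3 hX).
  apply/le_anti/andP; split.
    apply: Phi_le => // p Del Hp HDel.
    rewrite /PhiT.
    case: (lerP (vinf [set dA p.1 b | b in lab Del]) (vsup [set betaT trans dA d X1 X2 | d in D])) => hI.
      exact: le_trans (minL _ _) hI.
    apply: le_trans (minR _ _) _.
    apply: vsup_le => // _ [e De <-].
    have : PhiT trans dA e X2 p Del <= vsup [set betaT trans dA d X1 X2 | d in D].
      apply: le_trans (Phi_ub HdA (H01 e De) Hp HDel) _.
      have [He1 He2 He3] := HD e De.
      by rewrite -(formula trans HdA He1 He2 He3 hX); exact: bM.
    by rewrite /PhiT ge_min => /orP[h|//]; lra.
  have /andP[P0 _] := Phi_bnd trans HdA X1 X2 (dsup_bnd H01).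
  apply: vsup_le => // _ [e De <-].
  have [He1 He2 He3] := HD e De.
  rewrite (formula trans HdA He1 He2 He3 hX).
  apply: Phi_le => // p Del Hp HDel.
  apply: le_trans (Phi_ub HdA (dsup_bnd H01) Hp HDel).
  rewrite /PhiT le_min minL /=.
  apply: le_trans (minR _ _) _.
  exact: dsup_ub.
have [x X1x] : X1 !=set0.
  case: (set0_or X1) => // e; exfalso; apply: hX; by left.
have eX2 : X2 = set0.
  case: (set0_or X2) => // ne; exfalso; apply: hX; by right.
rewrite eX2 (part1 trans HdA); last by exists x.
case: neD => d0 D0.
apply/le_anti/andP; split; last first.
  by apply: vsup_le => // _ [e De <-]; rewrite (part1 trans HdA); last by exists x.
apply: (vsup_ge (c:=1) (x := betaT trans dA d0 X1 set0)).
- by move=> _ [e De <-]; rewrite (part1 trans HdA); last by exists x.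
- by exists d0.
- by rewrite (part1 trans HdA); last by exists x.
Qed.
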